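(* Let $n\geq 1$ and $s\geq 1$ be integers. Let $G$ be a connected graph on $n+s$ vertices and let $S\subseteq V(G)$ with $|S|=s$. Suppose that every non-terminal level with respect to $S$ contains at least $2$ vertices, and that the second level, if it is non-terminal, contains at least $3$ vertices. Then \[ \sigma(S)\leq \begin{cases} \frac{1}{4}(n^2+8), & \text{if } 2\mid n,\\[2pt] \frac{1}{4}(n^2+7), & \text{if } 2\nmid n. \end{cases} \]
   Context: For a connected graph $G$ and $\emptyset\neq S\subseteq V(G)$, $d_G(S,u)=\min\{d_G(u,v): v\in S\}$, and the status of $S$ is $\sigma(S)=\sigma_G(S)=\sum_{u\in V(G)} d_G(S,u)$. For $i\geq 1$, the $i$-th level with respect to $S$ is the set of vertices $u$ with $d_G(S,u)=i$. The terminal level is the nonempty level with the largest index $i$; the non-terminal levels are all levels $1,\dots,r$ preceding the terminal level $r+1$ (all of which are nonempty by connectivity). *)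

(* Defs.v *)
From mathcomp Require Import all_boot.
Set Implicit Arguments. Unset Strict Implicit. Unset Printing Implicit Defensive.

Definition walk_of_len (T : finType) (e : rel T) (v u : T) (k : nat) : bool :=
  [exists p : k.-tuple T, path e v p && (last v p == u)].

(* d_G(v,u): the length of a shortest walk (= shortest path) from v to u;
   distances in a graph on #|T| vertices are < #|T|, so searching k in
   0..#|T|-1 suffices for connected graphs. *)
Definition gdist (T : finType) (e : rel T) (v u : T) : nat :=
  find (fun k => walk_of_len e v u k) (iota 0 #|T|).

Definition setdist (T : finType) (e : rel T) (S : {set T}) (u : T) : nat :=
  \big[minn/#|T|]_(v in S) gdist e v u.

Definition status (T : finType) (e : rel T) (S : {set T}) : nat :=
  \sum_(u : T) setdist e S u.

Definition level (T : finType) (e : rel T) (S : {set T}) (i : nat) : {set T} :=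
  [set u | setdist e S u == i].

Definition terminal_index (T : finType) (e : rel T) (S : {set T}) : nat :=
  \max_(u : T) setdist e S u.

(* Main.v *)
Require Import Defs.
From mathcomp Require Import all_boot.
From mathcomp Require Import zify.

Lemma cnt (d t : nat) : \sum_(1 <= i < t) (d == i) <= 1.
Proof.
have -> : \sum_(1 <= i < t) (d == i) = count (pred1 d) (iota 1 (t - 1)).
  rewrite -sum1_count [RHS]big_mkcond /= /index_iota; apply: eq_bigr => i _.
  by rewrite eq_sym; case: (i == d).
rewrite count_uniq_mem ?iota_uniq //; by case: (_ \in _).
Qed.

Lemma tri m a : 2 * \sum_(a <= i < a + m) (a + m - i) = m * m.+1.
Proof.
elim: m a => [|m IH] a; first by rewrite addn0 big_geq.
rewrite addnS big_nat_recl ?leq_addr // -addSn mulnDr IH.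
rewrite subSn ?leq_addr // addKn. lia.
Qed.

Lemma pervert (d t : nat) : d <= t ->
  d + \sum_(1 <= i < t) (d == i) * (t - i) <= t.
Proof.
move=> dt.
have -> : \sum_(1 <= i < t) (d == i) * (t - i) = \sum_(1 <= i < t) (d == i) * (t - d).
  by apply: eq_bigr => i _; case: eqP => [->|].
rewrite -big_distrl /=.
have := cnt d t; case: (\sum_(1 <= i < t) (d == i)) => [|[|]] //=; lia.
Qed.

Lemma bigmin_le (T : eqType) (r : seq T) (P : pred T) (F : T -> nat) x u :
  u \in r -> P u -> \big[minn/x]_(i <- r | P i) F i <= F u.
Proof.
move=> ur Pu; elim: r ur => [|a r IH] //=; rewrite inE big_cons => /orP[/eqP <-|ur].
  by rewrite Pu geq_minl.
case: (P a); last exact: IH.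
by rewrite geq_min IH ?orbT.
Qed.

Lemma gdist_refl (T : finType) (e : rel T) (u : T) : 0 < #|T| -> gdist e u u = 0.
Proof.
rewrite /gdist; move: (#|T|) => [|m] //= _.
have -> : walk_of_len e u u 0.
  by apply/existsP; exists [tuple]; rewrite /= eqxx.
by [].
Qed.

Theorem lemma7 (T : finType) (e : rel T) (n s : nat) (S : {set T}) :
  symmetric e -> irreflexive e ->
  (forall u v : T, connect e u v) ->
  1 <= n -> 1 <= s ->
  #|T| = n + s -> #|S| = s ->
  (* every non-terminal level 1 <= i < terminal index has >= 2 vertices *)
  (forall i, 1 <= i < terminal_index e S -> 2 <= #|level e S i|) ->
  (* the second level, if non-terminal, has >= 3 vertices *)
  (2 < terminal_index e S -> 3 <= #|level e S 2|) ->
  (* sigma(S) <= (n^2+8)/4 if n even, (n^2+7)/4 if n odd *)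
  4 * status e S <= n ^ 2 + (if odd n then 7 else 8).
Proof.
move=> _ _ _ n1 s1 hT hS hlev hlev2.
set t := terminal_index e S.
set d := setdist e S.
have dS u : u \in S -> d u = 0.
  move=> uS; have g0 : gdist e u u = 0 by apply: gdist_refl; lia.
  apply/eqP; rewrite -leqn0 -g0.
  rewrite /d /setdist; apply: bigmin_le; by rewrite ?mem_index_enum.
have dt u : d u <= t by rewrite /t /terminal_index; exact: (leq_bigmax u).
pose Y := \sum_(1 <= i < t) (t - i) * #|level e S i|.
have key : status e S + Y <= t * n.
  have -> : Y = \sum_(u : T) \sum_(1 <= i < t) (d u == i) * (t - i).
    rewrite exchange_big /Y; apply: eq_bigr => i _.
    rewrite -big_distrl /= mulnC; congr (_ * _).
    rewrite -sum1_card big_mkcond /=; apply: eq_bigr => u _.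
    by rewrite /level inE; case: (_ == _).
  rewrite /status -big_split /=.
  have -> : t * n = \sum_(u : T) (u \notin S) * t.
    rewrite -big_distrl /= mulnC; congr (_ * _).
    have : #|~: S| = n by have := cardsC S; lia.
    move <-; rewrite -sum1_card big_mkcond /=; apply: eq_bigr => u _.
    by rewrite inE; case: (_ \in _).
  apply: leq_sum => u _.
  case: (boolP (u \in S)) => uS /=.
    rewrite -/d (dS u uS) add0n big1_seq // => i /andP[_]; rewrite mem_index_iota => /andP[i1 _].
    by case: i i1.
  rewrite -/d mul1n; exact: pervert.
have sq : forall a b : nat, 0 <= (a - b) * (a - b) by [].
case: (ltnP 2 t) => t3.
  have hY : t * t <= Y + 2.
    rewrite /Y (big_ltn (ltnW t3)) (big_ltn t3).
    have L1 := hlev 1 (ltnW t3).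
    have L2 := hlev2 t3.
    have hrest : (t - 3) * (t - 2) <= \sum_(3 <= i < t) (t - i) * #|level e S i|.
      have h2 := tri (t - 3) 3.
      rewrite (_ : 3 + (t - 3) = t) in h2; last by lia.
      have h3 : \sum_(3 <= i < t) (t - i) * 2 = 2 * \sum_(3 <= i < t) (t - i).
        by rewrite -big_distrl mulnC.
      suff h1 : \sum_(3 <= i < t) (t - i) * 2 <= \sum_(3 <= i < t) (t - i) * #|level e S i|.
        have -> : t - 2 = (t - 3).+1 by lia.
        lia.
      rewrite big_nat_cond [X in _ <= X]big_nat_cond.
      apply: leq_sum => i /andP[/andP[i3 it] _].
      rewrite leq_mul2l; apply/orP; right; apply: hlev; lia.
    have : (t - 1) * 2 <= (t - 1) * #|level e S 1| by rewrite leq_mul2l L1 orbT.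
    have : (t - 2) * 3 <= (t - 2) * #|level e S 2| by rewrite leq_mul2l L2 orbT.
    nia.
  case: (boolP (odd n)) => on.
    have := odd_double_half n; rewrite on => on'.
    move: on'; set k := n./2 => on'; rewrite -on' -!mul2n.
    case: (leqP t k) => tk; nia.
  move: on => /negbTE on; have := odd_double_half n; rewrite on add0n => en.
  move: en; set k := n./2 => en; rewrite -en -!mul2n.
  case: (leqP t k) => tk; nia.
case: (ltnP 1 t) => t2.
  have t2' : t = 2 by lia.
  have L1 := hlev 1 (ltac:(lia)).
  have hY : 2 <= Y by rewrite /Y t2' big_nat1; lia.
  case: (boolP (odd n)) => on.
    have := odd_double_half n; rewrite on => on'.
    move: on'; set k := n./2 => on'; rewrite -on' -!mul2n.
    case: (leqP k 1) => k1; [|case: (leqP k 2) => k2]; nia.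
  rewrite t2' in key; case: (leqP n 4) => n4; nia.
have tn : t * n <= n by rewrite -[X in _ <= X]mul1n leq_mul2r t2 orbT.
case: (boolP (odd n)) => _; case: (leqP n 3) => n3; nia.
Qed.
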